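(* Let $G$ be a Hausdorff topological group, $Y$ a topological space with a topological partial action $\theta$ of $G$, and $X$ a nonempty compact space, with $\hat\theta$ the induced partial action on $C(X,Y)$. Then: (i) $G*Y$ is open in $G\times Y$ if and only if $G*C(X,Y)$ is open in $G\times C(X,Y)$; (ii) $\theta$ is nice if and only if $\hat\theta$ is nice.
   Context: A topological partial action of $G$ on $Y$ is a family $\{\theta_g\colon Y_{g^{-1}}\to Y_g\}_{g\in G}$ of homeomorphisms between open subsets of $Y$ with $Y_e=Y$, $\theta_e=\mathrm{id}_Y$, $\theta_{g^{-1}}=\theta_g^{-1}$ and $\theta_g\circ\theta_h$ a restriction of $\theta_{gh}$ for all $g,h$. Its domain is $G*Y=\{(g,y)\in G\times Y: y\in Y_{g^{-1}}\}$; $\theta$ is continuous if $G*Y\to Y$, $(g,y)\mapsto\theta_g(y)$, is continuous (subspace topology), and nice if it is continuous and $G*Y$ is open in $G\times Y$. $C(X,Y)$ carries the compact-open topology. The induced partial action $\hat\theta$ on $C(X,Y)$ has $C(X,Y)_g=\{f: f(X)\subset Y_g\}$ and $\hat\theta_g(f)=\theta_g\circ f$; its domain is $G*C(X,Y)=\{(g,f)\in G\times C(X,Y): f(X)\subset Y_{g^{-1}}\}$. *)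

(* Defs.v *)
From HB Require Import structures.
From mathcomp Require Import all_boot all_order all_algebra.
From mathcomp Require Import all_classical all_reals.
From mathcomp Require Import topology.
Set Implicit Arguments. Unset Strict Implicit. Unset Printing Implicit Defensive.
Local Open Scope classical_set_scope.

Record topological_group (G : topologicalType) (mul : G -> G -> G)
    (inv : G -> G) (e : G) : Prop := TopologicalGroup {
  tg_mulA : forall x y z, mul x (mul y z) = mul (mul x y) z;
  tg_mul1g : forall x, mul e x = x;
  tg_mulg1 : forall x, mul x e = x;
  tg_mulVg : forall x, mul (inv x) x = e;
  tg_mulgV : forall x, mul x (inv x) = e;
  tg_mul_cont : continuous (fun p : G * G => mul p.1 p.2);
  tg_inv_cont : continuous inv }.

(* A topological partial action of G on Z: D g is the open set Z_g, and
   theta g : Z -> Z is a total function whose restriction to Z_{g^-1} is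
   the partial map theta_g : Z_{g^-1} -> Z_g (values outside Z_{g^-1} are
   irrelevant).  theta_g is a homeomorphism Z_{g^-1} -> Z_g with inverse
   theta_{g^-1} (surjectivity and continuity of the inverse follow by
   applying the axioms to g^-1, since inv (inv g) = g). *)
Record topological_partial_action (G : topologicalType) (mul : G -> G -> G)
    (inv : G -> G) (e : G) (Z : topologicalType)
    (D : G -> set Z) (theta : G -> Z -> Z) : Prop := TopPartialAction {
  pa_open : forall g, open (D g);
  pa_De : D e = setT;
  pa_thetae : forall z, theta e z = z;
  pa_maps : forall g z, D (inv g) z -> D g (theta g z);
  pa_cont : forall g, {within D (inv g), continuous (theta g)};
  pa_inv : forall g z, D (inv g) z -> theta (inv g) (theta g z) = z;
  pa_comp : forall g h z, D (inv h) z -> D (inv g) (theta h z) ->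
     D (inv (mul g h)) z /\ theta (mul g h) z = theta g (theta h z) }.

Definition pa_domain (G : topologicalType) (inv : G -> G) (Z : topologicalType)
    (D : G -> set Z) : set (G * Z) :=
  [set p | D (inv p.1) p.2].

Definition pa_continuous (G : topologicalType) (inv : G -> G)
    (Z : topologicalType) (D : G -> set Z) (theta : G -> Z -> Z) : Prop :=
  {within pa_domain inv D, continuous (fun p : G * Z => theta p.1 p.2)}.

Definition pa_nice (G : topologicalType) (inv : G -> G)
    (Z : topologicalType) (D : G -> set Z) (theta : G -> Z -> Z) : Prop :=
  open (pa_domain inv D) /\ pa_continuous inv D theta.

Definition CXY (X Y : topologicalType) : topologicalType :=
  set_type [set f : {compact-open, X -> Y} | continuous f].

Definition induced_dom (G X Y : topologicalType) (D : G -> set Y) :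
    G -> set (CXY X Y) :=
  fun g => [set f : CXY X Y | forall x, D g (sval f x)].

(* Induced maps: hat theta_g f = theta_g \o f (whenever this is continuous,
   in particular on C(X,Y)_{g^-1}; the value elsewhere is irrelevant). *)
Definition induced_map (G X Y : topologicalType) (theta : G -> Y -> Y) :
    G -> CXY X Y -> CXY X Y :=
  fun g f =>
    match pselect (continuous (theta g \o sval f : {compact-open, X -> Y})) with
    | left H => exist _ (theta g \o sval f : {compact-open, X -> Y}) (mem_set H)
    | right _ => f
    end.

(* Main.v *)
Require Import Defs.
From HB Require Import structures.
From mathcomp Require Import all_boot all_order all_algebra.
From mathcomp Require Import all_classical all_reals.
From mathcomp Require Import topology.
Set Implicit Arguments. Unset Strict Implicit. Unset Printing Implicit Defensive.
Local Open Scope classical_set_scope.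
Section Tube.
Context {G Y : topologicalType}.

Definition OU (W : set (G * Y)) (U : set G) : set Y :=
  [set y | exists V, [/\ open V, V y & U `*` V `<=` W]].

Definition sfilt (g : G) : set_system (set G) :=
  filter_from (nbhs g) (fun U => [set U' | U' `<=` U]).

Instance sfilt_filter g : Filter (sfilt g).
Proof.
apply: filter_from_filter; first by exists setT; exact: filterT.
move=> A B nA nB; exists (A `&` B); first exact: filterI.
by move=> U /= sU; split => x /sU [].
Qed.

Lemma tube (g : G) (K : set Y) (W : set (G * Y)) : compact K ->
  (forall y, K y -> nbhs (g, y) W) ->
  exists U, nbhs g U /\ exists V, [/\ open V, K `<=` V & U `*` V `<=` W].
Proof.
move=> /compact_near_coveringP cK hW.
have := cK _ (sfilt g) (OU W) (sfilt_filter g).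
case.
  move=> y Ky; have := hW y Ky; case=> -[A B] /= [nA nB] ABW.
  exists (interior B, [set U' | U' `<=` A]) => /=.
    split; first by apply: open_nbhs_nbhs; split; [exact: open_interior|exact: nB].
    by exists A.
  case=> y' U' /= [iBy' U'A]; exists (interior B); split => //; first exact: open_interior.
  by case=> a b /= [U'a ib]; apply: ABW; split; [exact: U'A|exact: interior_subset].
move=> U nU HU; exists U; split => //; exists (OU W U); split.
- rewrite openE => y [V [oV Vy UVW]]; rewrite /interior.
  apply: (@filterS _ _ _ V); last by apply: open_nbhs_nbhs.
  by move=> z Vz; exists V.
- exact: HU.
- by case=> a b [Ua [V [_ Vb UVW]]]; apply: UVW.
Qed.
End Tube.
Section CL.
Context {X Y : topologicalType}.
Local Notation C := (CXY X Y).

Lemma CXY_open (A : set {compact-open, X -> Y}) : open A ->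
  open ([set h : C | A (sval h)]).
Proof. move=> oA. exists A => //. Qed.

Lemma CXY_nbhs (f : C) (K : set X) (O : set Y) : compact K -> open O ->
  sval f @` K `<=` O -> nbhs f [set h : C | sval h @` K `<=` O].
Proof.
move=> cK oO fKO; apply: open_nbhs_nbhs; split => //.
exact: (CXY_open (compact_open_open cK oO)).
Qed.

Lemma CXY_cvg (F : set_system C) (h : C) : Filter F ->
  (forall K O, compact K -> open O -> sval h @` K `<=` O ->
     F [set h' | sval h' @` K `<=` O]) -> F --> h.
Proof.
move=> FF HF U [? /= [[W oW <-]]] /= Wh /filterS; apply.
have : (sval @ F) --> (sval h : {compact-open, X -> Y}).
  apply/compact_open_cvgP => K O cK oO hKO.
  exact: HF.
by apply; apply: open_nbhs_nbhs.
Qed.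

Lemma CXY_cont (f : C) : continuous (sval f).
Proof. by case: f => f /= /set_mem. Qed.


Definition cstC (y : Y) : C :=
  exist _ (cst y : {compact-open, X -> Y}) (mem_set (@cst_continuous X Y y)).

Lemma cstC_cont : continuous cstC.
Proof.
move=> y; apply: CXY_cvg => K O cK oO hKO.
have [[k Kk]|nK] := pselect (exists k, K k).
  have Oy : O y by apply: hKO; exists k.
  apply: (@filterS _ _ _ O); last exact: open_nbhs_nbhs.
  by move=> z Oz _ [k' _ <-].
apply: (@filterS _ _ _ setT); last exact: filterT.
by move=> z _ w [k' Kk' _]; exfalso; apply: nK; exists k'.
Qed.

Lemma within_at {T U : topologicalType} (A : set T) (h : T -> U) x :
  {within A, continuous h} -> A x -> forall O, nbhs (h x) O ->
  nbhs x [set z | A z -> O (h z)].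
Proof.
move=> hc Ax O nO.
move: hc; rewrite continuous_subspace_in => /(_ x).
rewrite inE => /(_ Ax) /(_ O nO).
move=> H; have E := nbhs_subspace_in Ax.
have H' : nbhs_subspace x (h @^-1` O) := H.
rewrite -E in H'; exact: H'.
Qed.


Lemma cont_comp_within {T U W : topologicalType} (A : set U) (h : U -> W)
  (f : T -> U) : {within A, continuous h} -> continuous f ->
  (forall t, A (f t)) -> continuous (h \o f).
Proof.
move=> hc fc Af t O nO.
have H := within_at hc (Af t) nO.
have H2 : nbhs t (f @^-1` [set z | A z -> O (h z)]) := fc t _ H.
apply: filterS H2 => z /=; apply; exact: Af.
Qed.

Lemma induced_mapE {G : topologicalType} (theta : G -> Y -> Y) (A : set Y) g
  (f : C) : {within A, continuous (theta g)} -> (forall x, A (sval f x)) ->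
  sval (induced_map theta g f) = theta g \o sval f.
Proof.
move=> hc Af; rewrite /induced_map; case: pselect => // -[].
move=> t; apply: (cont_comp_within hc _ Af). exact: CXY_cont.
Qed.
End CL.
Arguments CXY_cont {X Y} f.

Unset Implicit Arguments. Set Strict Implicit.

Theorem proposition3p3 (G : topologicalType) (mul : G -> G -> G)
    (inv : G -> G) (e : G) (Y X : topologicalType)
    (D : G -> set Y) (theta : G -> Y -> Y) :
  topological_group mul inv e ->
  hausdorff_space G ->
  topological_partial_action mul inv e D theta ->
  compact [set: X] -> (exists x : X, True) ->
  (open (pa_domain inv D) <->
     open (pa_domain inv (@induced_dom G X Y D))) /\
  (pa_nice inv D theta <->
     pa_nice inv (@induced_dom G X Y D) (@induced_map G X Y theta)).
Proof.
move=> _ _ tpa cX [x0 _].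
have pc : forall g, {within D (inv g), continuous (theta g)} :=
  fun g => @pa_cont _ _ _ _ _ _ _ tpa g.
have i1 : open (pa_domain inv D) -> open (pa_domain inv (@induced_dom G X Y D)).
  move=> oOm; rewrite openE => -[g f] /= Hf.
  have cK : compact (sval f @` setT) :=
    continuous_compact (continuous_subspaceT (CXY_cont f)) cX.
  have hW : forall y, (sval f @` setT) y -> nbhs (g, y) (pa_domain inv D).
    move=> y [x _ <-]; apply: open_nbhs_nbhs; split => //; exact: Hf.
  have [U [nU [V [oV KV UVW]]]] := tube cK hW.
  exists (U, [set h : CXY X Y | sval h @` setT `<=` V]) => /=.
    by split => //; apply: CXY_nbhs.
  case=> g' f' /= [Ug' Vf'] x.
  have := UVW (g', sval f' x); apply; split => //=.
  by apply: Vf'; exists x.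
have i2 : open (pa_domain inv (@induced_dom G X Y D)) -> open (pa_domain inv D).
  move=> oOmh; rewrite openE => -[g y] /= Hy.
  have : nbhs (g, @cstC X Y y) (pa_domain inv (@induced_dom G X Y D)).
    by apply: open_nbhs_nbhs; split => // x /=.
  case=> -[A B] /= [nA nB] ABO.
  exists (A, @cstC X Y @^-1` B) => /=; first by split => //; exact: cstC_cont.
  case=> g' y' /= [Ag' By'].
  have := ABO (g', @cstC X Y y'); rewrite /= => /(_ (conj Ag' By')) /(_ x0).
  by [].
split; first by split.
split.
- case=> oOm cth; split; first exact: i1.
  move: cth; rewrite /pa_continuous !continuous_open_subspace //; last exact: i1.
  move=> cth [g f]; rewrite inE => Hf.
  apply: CXY_cvg => K O cK oO hKO.
  rewrite /= (induced_mapE (pc g) Hf) in hKO.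
  have cL : compact (sval f @` K) :=
    continuous_compact (continuous_subspaceT (CXY_cont f)) cK.
  have hW : forall y, (sval f @` K) y ->
      nbhs (g, y) (pa_domain inv D `&` [set p | O (theta p.1 p.2)]).
    move=> y [k Kk <-]; apply: filterI.
      by apply: open_nbhs_nbhs; split => //; exact: Hf.
    have := cth (g, sval f k); rewrite inE => /(_ (Hf k)).
    apply; apply: open_nbhs_nbhs; split => //; apply: hKO; by exists k.
  have [U [nU [V [oV KV UVW]]]] := tube cL hW.
  have N1 : nbhs (g, f) (pa_domain inv (@induced_dom G X Y D)).
    by apply: open_nbhs_nbhs; split => //; exact: i1.
  have N2 : nbhs (g, f) (U `*` [set h : CXY X Y | sval h @` K `<=` V]).
    by exists (U, [set h : CXY X Y | sval h @` K `<=` V]) => //; split => //; exact: CXY_nbhs.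
  apply: filterS (filterI N1 N2).
  case=> g' f' [Hf' [Ug' Vf']] w [k Kk <-].
  rewrite /= (induced_mapE (pc g') Hf') /=.
  have := UVW (g', sval f' k); case; first by split => //; apply: Vf'; exists k.
  by [].
- case=> oOmh cth; split; first exact: i2.
  move: cth; rewrite /pa_continuous !continuous_open_subspace //; last exact: i2.
  move=> cth [g y]; rewrite inE => Hy.
  move=> U'; rewrite nbhsE => -[O [oO Oy] OU].
  have Hc : pa_domain inv (@induced_dom G X Y D) (g, @cstC X Y y) by move=> x.
  have := cth (g, @cstC X Y y); rewrite inE => /(_ Hc) cthat.
  have E : forall g' y', D (inv g') y' ->
      sval (induced_map theta g' (@cstC X Y y')) = theta g' \o cst y'.
    by move=> g' y' Hy'; rewrite (induced_mapE (pc g')).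
  have N1 : nbhs (induced_map theta g (@cstC X Y y))
      [set h : CXY X Y | sval h @` [set x0] `<=` O].
    apply: CXY_nbhs => //; first exact: compact_set1.
    by rewrite (E _ _ Hy) => w [x _ <-].
  have [[A B] /= [nA nB] ABS] := cthat _ N1.
  have N2 : nbhs (g, y) (pa_domain inv D) by apply: open_nbhs_nbhs; split => //; exact: i2.
  have N3 : nbhs (g, y) (A `*` (@cstC X Y @^-1` B)).
    by exists (A, @cstC X Y @^-1` B) => //; split => //; exact: cstC_cont.
  apply: filterS (filterI N2 N3).
  case=> g' y' [Hy' [Ag' By']]; apply: OU.
  have := ABS (g', @cstC X Y y') (conj Ag' By').
  rewrite /= (E _ _ Hy') => H; apply: H; by exists x0.
Qed.
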